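(* Let $m,d\in\mathbb N$. Let $H$ be a bipartite graph with vertex classes $X$ and $Y$ such that any two sets $X'\subseteq X$, $Y'\subseteq Y$ with $|X'|=|Y'|=m$ have an edge between them. If $|Y|\ge (3d+4)m$, then there is a set $B\subseteq X$ with $|B|\le m$ such that every $U\subseteq X\setminus B$ with $|U|\le 2m$ satisfies $|N(U)|\ge d|U|$.
   Context: For $U\subseteq V(H)$, $N(U)=\big(\bigcup_{u\in U}N(u)\big)\setminus U$ is the exterior neighbourhood in $H$. *)

(* Defs.v *)
From mathcomp Require Import all_boot.
Set Implicit Arguments. Unset Strict Implicit. Unset Printing Implicit Defensive.

Definition simple_graph (V : finType) (e : rel V) : Prop :=
  irreflexive e /\ symmetric e.

Definition bipartite_with (V : finType) (e : rel V) (X Y : {set V}) : Prop :=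
  [disjoint X & Y] /\ X :|: Y = [set: V] /\
  (forall u v, e u v -> (u \in X) && (v \in Y) || (u \in Y) && (v \in X)).

Definition nbr (V : finType) (e : rel V) (u : V) : {set V} := [set v | e u v].

Definition ext_nbhd (V : finType) (e : rel V) (U : {set V}) : {set V} :=
  (\bigcup_(u in U) nbr e u) :\: U.

(* Main.v *)
Require Import Defs.
From mathcomp Require Import all_boot.
From mathcomp Require Import zify.
Set Implicit Arguments. Unset Strict Implicit. Unset Printing Implicit Defensive.

Lemma subset_card_eq (T : finType) (A : {set T}) n :
  n <= #|A| -> exists S : {set T}, S \subset A /\ #|S| = n.
Proof.
move/card_geqP=> [s [us ss sub]]; exists [set x in s]; split.
  by apply/subsetP=> x; rewrite inE; exact: sub.
by rewrite cardsE (card_uniqP us) ss.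
Qed.

Lemma ext_nbhdU (V : finType) (e : rel V) (U B : {set V}) :
  ext_nbhd e (U :|: B) \subset ext_nbhd e U :|: ext_nbhd e B.
Proof.
apply/subsetP=> y; rewrite /ext_nbhd !inE negb_or => /andP[/andP[nU nB]].
case/bigcupP=> u; rewrite inE => /orP[uU|uB] yu.
  by rewrite nU /=; apply/orP; left; apply/bigcupP; exists u.
by rewrite nB /= orbC; apply/orP; left; apply/bigcupP; exists u.
Qed.

Lemma card_ext_nbhdU (V : finType) (e : rel V) (U B : {set V}) :
  #|ext_nbhd e (U :|: B)| <= #|ext_nbhd e U| + #|ext_nbhd e B|.
Proof.
have := subset_leq_card (ext_nbhdU e U B); rewrite cardsU; lia.
Qed.

Theorem proposition3p37 (m d : nat) (V : finType) (e : rel V) (X Y : {set V}) :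
  simple_graph e ->
  bipartite_with e X Y ->
  (forall X' Y' : {set V}, X' \subset X -> Y' \subset Y ->
     #|X'| = m -> #|Y'| = m -> exists x y, x \in X' /\ y \in Y' /\ e x y) ->
  (3 * d + 4) * m <= #|Y| ->
  exists B : {set V}, B \subset X /\ #|B| <= m /\
    forall U : {set V}, U \subset X :\: B -> #|U| <= 2 * m ->
      d * #|U| <= #|ext_nbhd e U|.
Proof.
move=> _ [dXY [_ _]] Hm HY.
have key : forall U : {set V}, U \subset X -> m <= #|U| ->
    #|Y| < #|ext_nbhd e U| + m.
  move=> U UX mU; rewrite ltnNge; apply/negP=> H.
  have H2 : m <= #|Y :\: ext_nbhd e U|.
    move: H; rewrite -(cardsID (ext_nbhd e U) Y).
    have := subset_leq_card (subsetIr Y (ext_nbhd e U)); lia.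
  have [X' [X'U cX']] := subset_card_eq mU.
  have [Y' [Y'D cY']] := subset_card_eq H2.
  have [x [y [xX' [yY' exy]]]] := Hm X' Y' (subset_trans X'U UX)
     (subset_trans Y'D (subsetDl _ _)) cX' cY'.
  have := subsetP Y'D y yY'; rewrite !inE => /andP[/negP []].
  have xU := subsetP X'U x xX'.
  apply/andP; split; last by apply/bigcupP; exists x => //; rewrite inE.
  apply/negP=> yU.
  have yX := subsetP UX y yU.
  have yY : y \in Y by have := subsetP Y'D y yY'; rewrite inE => /andP[].
  by rewrite (disjointFr dXY yX) in yY.
pose P := fun S : {set V} =>
  [&& S \subset X, #|S| <= 2 * m & #|ext_nbhd e S| <= d * #|S|].
have P0 : P set0.
  rewrite /P sub0set cards0 leq0n /= muln0 leqn0 cards_eq0.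
  by apply/eqP/setP=> y; rewrite /ext_nbhd !inE big_set0 inE.
case: (@arg_maxnP _ set0 P (fun S => #|S|) P0) => B PB Bmax.
move: PB => /and3P[BX B2m NB].
have Bm : #|B| < m.
  rewrite ltnNge; apply/negP=> mB; have := key B BX mB.
  have : d * #|B| <= d * (2 * m) by rewrite leq_mul2l B2m orbT.
  nia.
exists B; split=> //; split; first exact: ltnW.
move=> U UXB U2m; rewrite leqNgt; apply/negP=> NU.
have UX : U \subset X := subset_trans UXB (subsetDl _ _).
have dUB : U :&: B = set0.
  apply/setP=> x; rewrite !inE; apply/negP=> /andP[xU xB].
  by have := subsetP UXB x xU; rewrite inE xB.
have cUB : #|U :|: B| = #|U| + #|B|.
  by rewrite cardsU (_ : U :&: B = set0) ?cards0 ?subn0.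
have NUB := card_ext_nbhdU e U B.
have UBX : U :|: B \subset X by rewrite subUset UX.
case: (leqP #|U :|: B| (2 * m)) => h.
  have : P (U :|: B) by rewrite /P UBX h /= cUB; lia.
  move/Bmax; rewrite cUB; lia.
have := key _ UBX; rewrite cUB in h * => K.
have : m <= #|U| + #|B| by lia.
move/K; nia.
Qed.
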